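(* No randomized (adaptive) priority algorithm for one-sided bipartite matching can achieve an approximation ratio better than $\frac{53}{54}$.
   Context: One-sided bipartite matching: the offline side's vertex names are known in advance; each online vertex corresponds to a data item consisting of its name together with its set of offline neighbours; when a data item is received the algorithm must irrevocably match that online vertex to an unmatched neighbour or leave it unmatched; the goal is a maximum-size matching. Adaptive priority model: before each step the algorithm specifies a total ordering $\pi$ of the universe of all possible data items (which may depend on previously received data items and decisions), and receives the remaining data item of the instance that comes first in $\pi$, then decides. A randomized priority algorithm may in addition use random bits in its orderings and decisions; its approximation ratio is $\inf_I \mathbb{E}[v(\mathbb{A},I)]/v(I)$, with $v(I)$ the maximum matching size. *)

(* Defs.v *)
From HB Require Import structures.
From mathcomp Require Import all_boot all_order all_algebra finmap.
From mathcomp Require Import all_classical all_reals all_analysis.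
Set Implicit Arguments. Unset Strict Implicit. Unset Printing Implicit Defensive.

(* A data item = (online name, set of offline neighbours).             *)

Definition item : Type := (nat * {fset nat})%type.

Record instance : Type := Instance {
  offline : {fset nat};
  items : seq item }.

Definition valid_instance (I : instance) : Prop :=
  uniq (map fst (items I)) /\
  (forall x, x \in items I -> (x.2 `<=` offline I)%fset).

(* A matching of I: list of (online name, offline vertex) pairs that are
   edges, using each online and each offline vertex at most once. *)
Definition is_matching (I : instance) (m : seq (nat * nat)) : Prop :=
  uniq (map fst m) /\ uniq (map snd m) /\
  (forall p, p \in m -> exists2 x, x \in items I & x.1 = p.1 /\ p.2 \in x.2).

Definition max_matching_size (I : instance) (k : nat) : Prop :=
  (exists m, is_matching I m /\ size m = k) /\
  (forall m, is_matching I m -> size m <= k)%N.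

(* History: received data items with the (effective) decisions taken;
   None = left unmatched, Some u = matched to offline vertex u. *)
Definition history : Type := seq (item * option nat).

Definition total_order_on (T : Type) (le : rel T) : Prop :=
  reflexive le /\ antisymmetric le /\ transitive le /\ total le.

(* A deterministic adaptive priority algorithm: given the offline side and
   the history so far, it specifies a total order of the universe of all
   possible data items, and a decision for the received data item. *)
Record det_alg : Type := DetAlg {
  order_of : {fset nat} -> history -> rel item;
  decide : {fset nat} -> history -> item -> option nat }.

Definition det_alg_valid (A : det_alg) : Prop :=
  forall V h, total_order_on (order_of A V h).

Definition first_in (le : rel item) (s : seq item) : option item :=
  foldr (fun x acc => match acc with
                      | None => Some x
                      | Some y => if le x y then Some x else Some y
                      end) None s.

Definition matched_offline (h : history) : seq nat :=
  pmap snd h.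

Definition effective (h : history) (x : item) (d : option nat) : option nat :=
  match d with
  | Some u => if (u \in x.2) && (u \notin matched_offline h) then Some u else None
  | None => None
  end.

Fixpoint run_aux (A : det_alg) (V : {fset nat}) (fuel : nat)
    (rest : seq item) (h : history) : history :=
  match fuel with
  | 0 => h
  | fuel'.+1 =>
    match first_in (order_of A V h) rest with
    | None => h
    | Some x =>
      let d := effective h x (decide A V h x) in
      run_aux A V fuel' (rem x rest) (rcons h (x, d))
    end
  end.

Definition alg_value (A : det_alg) (I : instance) : nat :=
  size (matched_offline
          (run_aux A (offline I) (size (items I)) (items I) [::])).

(* Main.v *)
Require Import Defs.
From HB Require Import structures.
From mathcomp Require Import all_boot all_order all_algebra finmap.
From mathcomp Require Import all_classical all_reals all_analysis.
From mathcomp Require Import measurable_realfun lra.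
Import Order.TTheory GRing.Theory Num.Theory.

Set Implicit Arguments. Unset Strict Implicit. Unset Printing Implicit Defensive.

Section Comb.
Local Open Scope fset_scope.

Definition pairset (j : nat) : {fset nat} := [fset u in iota 0 3 | u != j].
Lemma pairsetE j u : (u \in pairset j) = (u < 3)%N && (u != j).
Proof. by rewrite !inE /=; case: u => [|[|[|u]]]. Qed.

Lemma first_in_mem le s y : first_in le s = Some y -> y \in s.
Proof.
elim: s y => //= x s IH y.
case E: (first_in le s) => [z|] .
  case: ifP => _ [<-]; first by rewrite mem_head.
  by rewrite in_cons (IH _ E) orbT.
by move=> [<-]; rewrite mem_head.
Qed.

Lemma first_in_nil le s : first_in le s = None -> s = [::].
Proof. by case: s => //= x s; case: (first_in le s) => // z; case: ifP. Qed.

Lemma first_in_min le s y : total_order_on le -> first_in le s = Some y ->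
  forall z, z \in s -> le y z.
Proof.
move=> [refl [_ [tr tot]]].
elim: s y => //= x s IH y.
case E: (first_in le s) => [w|].
  case: ifP => Hxw [<-] z; rewrite in_cons => /orP[/eqP->|zs].
  - exact: refl.
  - exact: tr (IH _ E _ zs).
  - by case/orP: (tot x w) => //; rewrite Hxw.
  - exact: IH.
move=> [<-] z; rewrite in_cons => /orP[/eqP->|]; first exact: refl.
by rewrite (first_in_nil E).
Qed.

Lemma matched_mem h u : u \in matched_offline h -> exists x, (x, Some u) \in h.
Proof.
rewrite /matched_offline mem_pmap => /mapP [[x o] xin /= eo].
by exists x; rewrite eo.
Qed.

Lemma run_inv A V fuel rest h p :
  p \in run_aux A V fuel rest h ->
  p \in h \/ (p.1 \in rest /\ forall u, p.2 = Some u -> u \in p.1.2).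
Proof.
elim: fuel rest h => [|n IH] rest h /=; first by left.
case E: (first_in _ rest) => [x|]; last by left.
move=> /IH [].
  rewrite -cats1 mem_cat => /orP[]; first by left.
  rewrite mem_seq1 => /eqP-> /=; right; split; first exact: first_in_mem E.
  move=> u; rewrite /effective; case: (decide A V h x) => // v.
  by case: ifP => // /andP[H _] [<-].
by move=> [/mem_rem H1 H2]; right.
Qed.

Lemma run_uniq A V fuel rest h :
  uniq (matched_offline h) -> uniq (matched_offline (run_aux A V fuel rest h)).
Proof.
elim: fuel rest h => [|n IH] rest h //= Hu.
case E: (first_in _ rest) => [x|] //; apply: IH.
rewrite /matched_offline -cats1 pmap_cat /= /effective.
case: (decide A V h x) => [v|]; last by rewrite cats0.
case: ifP => [/andP[_ H]|_]; last by rewrite cats0.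
by rewrite cats1 rcons_uniq H Hu.
Qed.


Lemma run_step A V n rest h x :
  first_in (order_of A V h) rest = Some x ->
  run_aux A V n.+1 rest h =
  run_aux A V n (rem x rest) (rcons h (x, effective h x (decide A V h x))).
Proof. by move=> /= ->. Qed.

Definition itm (j c : nat) : item := ((2 * j + c)%N, pairset j).
Definition U : seq item := [:: itm 0 0; itm 0 1; itm 1 0; itm 1 1; itm 2 0; itm 2 1].
Definition V : {fset nat} := pairset 3.
Definition inst (t : nat * nat * nat) : instance :=
  let: (j, c, p) := t in Instance V [:: itm j c; itm p 0; itm p 1].
Definition T : seq (nat * nat * nat) :=
  [:: (0,0,1); (0,0,2); (0,1,1); (0,1,2);
      (1,0,0); (1,0,2); (1,1,0); (1,1,2);
      (2,0,0); (2,0,1); (2,1,0); (2,1,1)]%N.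

Lemma uniqT : uniq T. Proof. by []. Qed.

Lemma inst_items t x : x \in items (inst t) -> exists k, x.2 = pairset k.
Proof.
case: t => [[j c] p] /=; rewrite !in_cons orbF.
by case/or3P => /eqP->; eexists.
Qed.

Lemma value_le3 A t : (alg_value A (inst t) <= 3)%N.
Proof.
rewrite /alg_value.
have -> : 3%N = size (iota 0 3) by [].
apply: uniq_leq_size; first exact: run_uniq.
move=> u /matched_mem [x /run_inv [] //= [/inst_items [k ->] /(_ u erefl)]].
rewrite pairsetE => /andP[H _]; by case: u H => [|[|[|]]].
Qed.

Lemma bad_value A e j c p :
  total_order_on (order_of A V [::]) ->
  first_in (order_of A V [::]) U = Some e ->
  e = itm j c -> (j < 3)%N -> (p < 3)%N -> p != j ->
  effective [::] e (decide A V [::] e) != Some p ->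
  (alg_value A (inst (j, c, p)) <= 2)%N.
Proof.
move=> tot Htop He hj hp hpj hd; subst e.
set le := order_of A V [::].
have [refl [anti _]] := tot.
have eU : itm j c \in U by exact: first_in_mem Htop.
have sU : {subset items (inst (j, c, p)) <= U}.
  have hU : itm p 0 \in U /\ itm p 1 \in U.
    by move: hp; case: (p) => [|[|[|]]] //= _; rewrite /U !in_cons !eqxx !orbT.
  by move=> x /=; rewrite !in_cons orbF => /or3P[/eqP->//|/eqP->|/eqP->]; case: hU.
have Hf : first_in le (items (inst (j, c, p))) = Some (itm j c).
  case E: (first_in le _) => [y|]; last by move/first_in_nil: E.
  congr Some; apply: anti; apply/andP; split.
    exact: first_in_min tot E _ (mem_head _ _).
  exact: first_in_min tot Htop _ (sU _ (first_in_mem E)).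
rewrite /alg_value.
have -> : size (items (inst (j, c, p))) = 3 by [].
rewrite (run_step _ Hf).
have -> : rem (itm j c) (items (inst (j, c, p))) = [:: itm p 0; itm p 1] by rewrite /= eqxx.
apply: (@leq_trans (size [seq u <- iota 0 3 | u != p])); last by move: hp; case: (p) => [|[|[|]]].
apply: uniq_leq_size; first by apply: run_uniq; rewrite /matched_offline /=; case: (effective _ _ _).
move=> u /matched_mem [x /run_inv []].
  rewrite mem_seq1 => /eqP [Ex He]; subst x.
  have := hd; rewrite -He => /eqP hup.
  move: He; rewrite /effective; case: (decide _ _ _ _) => // v.
  case: ifP => // /andP[hv _] [Eu]; subst v; move: hv.
  rewrite pairsetE => /andP[h3 _]; rewrite mem_filter mem_iota /= add0n h3 andbT.
  by apply/eqP => E; apply: hup; rewrite E.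
move=> /= [xin /(_ u erefl)]; move: xin; rewrite !in_cons orbF.
move=> [xin hu]; move: xin hu => /orP[] /eqP-> /=; rewrite pairsetE => /andP[h3 hne];
  by move: hp h3 hne; case: (p) => [|[|[|]]] //; case: u => [|[|[|]]].
Qed.


Lemma T_spec t : t \in T -> [/\ (t.1.1 < 3)%N, (t.1.2 < 2)%N, (t.2 < 3)%N & t.2 != t.1.1].
Proof. by rewrite /T !inE => /orP[|/orP[|/orP[|/orP[|/orP[|/orP[|/orP[|/orP[|/orP[|/orP[|/orP[|]]]]]]]]]]] /eqP->. Qed.

Lemma valid_inst t : t \in T -> valid_instance (inst t).
Proof.
case: t => [[j c] p] /T_spec /= [hj hc hp hpj]; split.
  by move: hj hc hp hpj; case: j => [|[|[|]]] //; case: c => [|[|]] //; case: p => [|[|[|]]].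
move=> x; rewrite !in_cons orbF => /or3P[]/eqP-> /=; apply/fsubsetP => u;
  by rewrite /V !pairsetE => /andP[h _]; rewrite h /= neq_ltn h.
Qed.

Lemma max_inst t : t \in T -> max_matching_size (inst t) 3.
Proof.
case: t => [[j c] p] /T_spec /= [hj hc hp hpj]; split.
  exists [:: ((2 * j + c)%N, p); ((2 * p)%N, (3 - j - p)%N); ((2 * p + 1)%N, j)].
  split => //; split.
    by move: hj hc hp hpj; case: j => [|[|[|]]] //; case: c => [|[|]] //; case: p => [|[|[|]]].
  split.
    by move: hj hc hp hpj; case: j => [|[|[|]]] //; case: c => [|[|]] //; case: p => [|[|[|]]].
  move=> q; rewrite !in_cons orbF => /or3P[]/eqP-> /=.
  - by exists (itm j c); rewrite ?mem_head //; split => //; rewrite pairsetE hp hpj.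
  - exists (itm p 0); first by rewrite !in_cons eqxx orbT.
    split; [by rewrite /itm /= addn0|]. rewrite /= pairsetE; move: hj hp hpj; case: j => [|[|[|]]] //; case: p => [|[|[|]]] //.
  - exists (itm p 1); first by rewrite !in_cons eqxx !orbT.
    split; [by rewrite /itm /= addn1| rewrite /= pairsetE hj; by rewrite eq_sym].
move=> m [_ [Hu Hm]].
rewrite -(size_map snd); apply: (@leq_trans (size (iota 0 3))) => //.
apply: uniq_leq_size => // u /mapP [q qm ->].
have [x xin [_ hx]] := Hm q qm.
move: xin hx; rewrite /= !in_cons orbF => /or3P[]/eqP-> /=;
  by rewrite pairsetE => /andP[h _]; case: (q.2) h => [|[|[|]]].
Qed.

Lemma choose_p (j c : nat) (d : option nat) : (j < 3)%N -> (c < 2)%N ->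
  exists p, [/\ (p < 3)%N, p != j, d != Some p & (j, c, p) \in T].
Proof.
move=> hj hc.
case: j hj => [|[|[|]]] // _; case: c hc => [|[|]] // _;
  case: d => [[|[|[|v]]]|];
  solve [ exists 0%N; split => // | exists 1%N; split => // | exists 2%N; split => // ].
Qed.

Lemma exists_bad A : det_alg_valid A ->
  exists2 t0, t0 \in T & (alg_value A (inst t0) <= 2)%N.
Proof.
move=> vA; have tot := vA V [::].
case E: (first_in (order_of A V [::]) U) => [e|]; last by move/first_in_nil: E.
have eU := first_in_mem E.
have key : forall j c, e = itm j c -> (j < 3)%N -> (c < 2)%N ->
    exists2 t0, t0 \in T & (alg_value A (inst t0) <= 2)%N.
  move=> j c He hj hc.
  have [p [hp hpj hdp pT]] := @choose_p j c (effective [::] e (decide A V [::] e)) hj hc.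
  by exists (j, c, p) => //; exact: bad_value tot E He hj hp hpj hdp.
move: eU; rewrite /U !in_cons orbF.
by case/orP=> [/eqP H|/orP[/eqP H|/orP[/eqP H|/orP[/eqP H|/orP[/eqP H|/eqP H]]]]];
  exact: key H _ _.
Qed.
Lemma sum_bound A : det_alg_valid A -> (\sum_(t <- T) alg_value A (inst t) <= 35)%N.
Proof.
move=> /exists_bad [t0 t0T h0].
rewrite (bigD1_seq t0) //=.
have H1 : (\sum_(t <- T | t != t0) alg_value A (inst t) <= \sum_(t <- T | t != t0) 3)%N.
  by apply: leq_sum => t _; exact: value_le3.
have H2 : (\sum_(t <- T) 3 = 3 + \sum_(t <- T | t != t0) 3)%N by rewrite (bigD1_seq t0).
have H3 : (\sum_(t <- T) 3 = 36)%N by rewrite big_const_seq.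
have H4 : (\sum_(t <- T | t != t0) 3 = 33)%N.
  by apply/eqP; rewrite -(eqn_add2l 3) -H2 H3.
by apply: (leq_trans (leq_add h0 H1)); rewrite H4.
Qed.

End Comb.

Local Open Scope ring_scope.

Theorem theorem8 (R : realType) (d : measure_display) (Omega : measurableType d)
    (P : probability Omega R) (A : Omega -> det_alg) :
  (forall w, det_alg_valid (A w)) ->
  (forall I, valid_instance I ->
     measurable_fun setT (fun w => ((alg_value (A w) I)%:R : R))) ->
  forall eps : R, 0 < eps ->
  exists I : instance, exists k : nat,
    [/\ valid_instance I, max_matching_size I k, (0 < k)%N &
     (\int[P]_w ((alg_value (A w) I)%:R : R)%:E
        <= ((53 / 54 + eps) * k%:R)%:E)%E].
Proof.
move=> vA hm eps heps.
set c := (53 / 54 + eps) * 3%:R.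
suff [t tT ht] : exists2 t, t \in T &
    (\int[P]_w ((alg_value (A w) (inst t))%:R : R)%:E <= c%:E)%E.
  by exists (inst t), 3%N; split => //; [exact: valid_inst | exact: max_inst].
case: (pselect (exists2 t, t \in T &
    (\int[P]_w ((alg_value (A w) (inst t))%:R : R)%:E <= c%:E)%E)) => // Hn.
exfalso.
have Hlt : forall t, t \in T ->
    (c%:E < \int[P]_w ((alg_value (A w) (inst t))%:R : R)%:E)%E.
  by move=> t tT; rewrite ltNge; apply/negP => h; apply: Hn; exists t.
pose F (t : nat * nat * nat) (w : Omega) : \bar R :=
  if t \in T then ((alg_value (A w) (inst t))%:R : R)%:E else 0%E.
have mF : forall t, measurable_fun [set: Omega] (F t : Omega -> \bar R).
  move=> t; rewrite /F; case tT: (t \in T); last exact: measurable_cst.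
  exact: (proj2 (measurable_EFinP _ (fun w => ((alg_value (A w) (inst t))%:R : R)))) (hm _ (valid_inst tT)).
have F0 : forall t w, setT w -> (0 <= F t w)%E.
  by move=> t w _; rewrite /F; case: ifP => // _; rewrite lee_fin.
have Hsum := @ge0_integral_sum _ _ _ P setT measurableT _ F mF F0 T.
have E1 : (\int[P]_(w in setT) (cst ((35%:R : R)%:E)) w = (35%:R : R)%:E)%E.
  rewrite integral_cst // (_ : _ [set: Omega]%classic = 1%E) ?mule1 //; exact: (@probability_setT _ _ _ P).
have Hup : (\int[P]_(w in setT) (\sum_(t <- T) F t w) <= (35%:R : R)%:E)%E.
  rewrite -E1; apply: ge0_le_integral => //.
  - by move=> w _; apply: sume_ge0 => t _; exact: F0.
  - by apply: emeasurable_sum => t; exact: mF.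
  move=> w _; rewrite /F big_seq.
  under eq_bigr => t tT do rewrite tT.
  rewrite -big_seq sumEFin lee_fin -natr_sum ler_nat.
  exact: sum_bound.
have Hlow : (\sum_(t <- T) c%:E <= \sum_(t <- T) \int[P]_(w in setT) F t w)%E.
  rewrite big_seq [X in (_ <= X)%E]big_seq; apply: lee_sum => t tT.
  apply: ltW; rewrite /F; under eq_integral => w _ do rewrite tT.
  exact: Hlt.
have Hc : (\sum_(t <- T) c%:E <= (35%:R : R)%:E)%E by rewrite (le_trans Hlow) // -Hsum.
rewrite sumEFin lee_fin big_const_seq /= /c in Hc.
lra.
Qed.
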